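(* Let $\mathcal H=\mathbb C^d$ with orthonormal basis $\{|k\rangle\}_{k=1}^d$. A quantum channel $\mathcal M$ on $M_d(\mathbb C)$ is multiphase covariant if and only if it admits a representation $$\mathcal M(\rho)=\sum_{i=1}^r M_i\rho M_i^\dagger+\sum_{k=1}^d\sum_{j\neq k}p(j|k)\,|j\rangle\langle k|\rho|k\rangle\langle j|,$$ where each $M_i$ is diagonal in the basis $\{|k\rangle\}$ and each $p(j|k)\ge0$.
   Context: For $\boldsymbol\theta\in[0,2\pi)^d$ let $U_{\boldsymbol\theta}=\sum_k e^{i\theta_k}|k\rangle\langle k|$ and $\mathcal U_{\boldsymbol\theta}=U_{\boldsymbol\theta}\cdot U_{\boldsymbol\theta}^\dagger$. A quantum channel $\mathcal M$ is multiphase covariant if $\mathcal U_{\boldsymbol\theta}\circ\mathcal M=\mathcal M\circ\mathcal U_{\boldsymbol\theta}$ for all $\boldsymbol\theta$. *)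

(* Defs.v *)
(* Complex numbers are modelled by an arbitrary
   numClosedFieldType C (e.g. algC). *)
From HB Require Import structures.
From mathcomp Require Import all_boot all_order all_algebra.
Set Implicit Arguments. Unset Strict Implicit. Unset Printing Implicit Defensive.
Import Order.TTheory GRing.Theory Num.Theory.
Local Open Scope ring_scope.

Definition adjmx (C : numClosedFieldType) m n (A : 'M[C]_(m, n)) : 'M[C]_(n, m) :=
  map_mx Num.conj (A^T).

Definition psdF (C : numClosedFieldType) (I : finType) (A : I -> I -> C) : Prop :=
  forall v : I -> C, 0 <= \sum_(i : I) \sum_(j : I) Num.conj (v i) * A i j * v j.

Definition is_linear_map (C : numClosedFieldType) d (Phi : 'M[C]_d -> 'M[C]_d) : Prop :=
  forall (a : C) (A B : 'M[C]_d), Phi (a *: A + B) = a *: Phi A + Phi B.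

(* Complete positivity: for every n, id_n (x) Phi maps positive semidefinite
   operators on C^n (x) C^d (indexed by 'I_n * 'I_d) to positive
   semidefinite ones.  (id_n (x) Phi) acts blockwise on the d x d blocks
   X_(a,b) = \matrix_(k,l) X (a,k) (b,l). *)
Definition completely_positive (C : numClosedFieldType) d (Phi : 'M[C]_d -> 'M[C]_d) : Prop :=
  forall (n : nat) (X : 'I_n * 'I_d -> 'I_n * 'I_d -> C),
    psdF X ->
    psdF (fun p q : 'I_n * 'I_d =>
            Phi (\matrix_(k, l) X (p.1, k) (q.1, l)) p.2 q.2).

Definition trace_preserving (C : numClosedFieldType) d (Phi : 'M[C]_d -> 'M[C]_d) : Prop :=
  forall rho : 'M[C]_d, \tr (Phi rho) = \tr rho.

Definition quantum_channel (C : numClosedFieldType) d (Phi : 'M[C]_d -> 'M[C]_d) : Prop :=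
  [/\ is_linear_map Phi, completely_positive Phi & trace_preserving Phi].

(* U_theta = sum_k e^{i theta_k} |k><k|, with the phases e^{i theta_k} given
   as unit-modulus scalars u k. *)
Definition phase_unitary (C : numClosedFieldType) d (u : 'I_d -> C) : 'M[C]_d :=
  diag_mx (\row_k u k).

Definition multiphase_covariant (C : numClosedFieldType) d (Phi : 'M[C]_d -> 'M[C]_d) : Prop :=
  forall u : 'I_d -> C, (forall k, `|u k| = 1) ->
  forall rho : 'M[C]_d,
    phase_unitary u *m Phi rho *m adjmx (phase_unitary u)
    = Phi (phase_unitary u *m rho *m adjmx (phase_unitary u)).

(* Main.v *)
Require Import Defs.
From HB Require Import structures.
From mathcomp Require Import all_boot all_order all_algebra.
From mathcomp Require Import ring.
Set Implicit Arguments. Unset Strict Implicit. Unset Printing Implicit Defensive.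
Import Order.TTheory GRing.Theory Num.Theory.
Local Open Scope ring_scope.

Section Q.
Variable C : numClosedFieldType.

Definition Qf (I : finType) (A : I -> I -> C) (v : I -> C) :=
  \sum_(i : I) \sum_(j : I) Num.conj (v i) * A i j * v j.

Lemma sum_delta_r (I : finType) (F : I -> C) k :
  \sum_i F i * (i == k)%:R = F k.
Proof.
rewrite (bigD1 k) //= eqxx mulr1 big1 ?addr0 // => i /negbTE ->; exact: mulr0.
Qed.

Lemma sum_delta_l (I : finType) (F : I -> C) k :
  \sum_i (i == k)%:R * F i = F k.
Proof. by rewrite -(@sum_delta_r I F k); apply: eq_bigr => i _; rewrite mulrC. Qed.

Lemma Q_expand (I : finType) (A : I -> I -> C) v k t :
  Qf A (fun i => v i + (i == k)%:R * t) =
  Qf A v + Num.conj t * (\sum_j A k j * v j)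
    + t * (\sum_i Num.conj (v i) * A i k) + Num.conj t * t * A k k.
Proof.
rewrite /Qf.
have E : forall i j, Num.conj (v i + (i == k)%:R * t) * A i j * (v j + (j == k)%:R * t)
   = Num.conj (v i) * A i j * v j + (Num.conj (v i) * A i j * t) * (j == k)%:R
     + (i == k)%:R * (Num.conj t * A i j * v j)
     + (i == k)%:R * ((Num.conj t * A i j * t) * (j == k)%:R).
  move=> i j; rewrite rmorphD rmorphM rmorph_nat /=; ring.
under eq_bigr do under eq_bigr do rewrite E.
under eq_bigr do rewrite !big_split /=.
rewrite !big_split /=.
have h1 : \sum_i \sum_j (v i)^* * A i j * t * (j == k)%:R = t * \sum_i (v i)^* * A i k.
  rewrite mulr_sumr; apply: eq_bigr => i _.
  by rewrite (@sum_delta_r I (fun j => (v i)^* * A i j * t)) mulrC mulrA.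
have h2 : \sum_i \sum_j (i == k)%:R * (t^* * A i j * v j) = t^* * \sum_j A k j * v j.
  under eq_bigr do rewrite -mulr_sumr.
  rewrite (@sum_delta_l I (fun i => \sum_j (t^* * A i j * v j))) mulr_sumr.
  by apply: eq_bigr => j _; rewrite mulrA.
have h3 : \sum_i \sum_j (i == k)%:R * (t^* * A i j * t * (j == k)%:R) = t^* * t * A k k.
  under eq_bigr do rewrite -mulr_sumr.
  rewrite (@sum_delta_l I (fun i => \sum_j (t^* * A i j * t * (j == k)%:R))).
  rewrite (@sum_delta_r I (fun j => (t^* * A k j * t))); ring.
rewrite h1 h2 h3; ring.
Qed.


Definition ev (I : finType) (a : I) : I -> C := fun i => (i == a)%:R.

Lemma Q_ev (I : finType) (A : I -> I -> C) a : Qf A (ev a) = A a a.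
Proof.
rewrite /Qf /ev (bigD1 a) //= [X in _ + X]big1 ?addr0.
  rewrite (bigD1 a) //= [X in _ + X]big1 ?addr0 ?eqxx ?rmorph1 ?mul1r ?mulr1 //.
  by move=> j /negbTE ->; rewrite mulr0.
by move=> i /negbTE ->; rewrite rmorph0 big1 // => j _; rewrite !mul0r.
Qed.

Lemma sum_ev_r (I : finType) (F : I -> C) a : \sum_j F j * ev a j = F a.
Proof. exact: sum_delta_r. Qed.

Lemma sum_ev_l (I : finType) (F : I -> C) a : \sum_i Num.conj (ev a i) * F i = F a.
Proof.
rewrite -(@sum_delta_l I F a); apply: eq_bigr => i _; by rewrite /ev rmorph_nat.
Qed.

Lemma psd_diag (I : finType) (A : I -> I -> C) a : psdF A -> 0 <= A a a.
Proof. by move=> H; have := H (ev a); rewrite -[X in 0 <= X]/(Qf A (ev a)) Q_ev. Qed.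

Lemma psd_herm (I : finType) (A : I -> I -> C) a b : psdF A -> A b a = Num.conj (A a b).
Proof.
move=> H.
have h1 := H (fun i => ev a i + (i == b)%:R * 1).
have h2 := H (fun i => ev a i + (i == b)%:R * 'i).
move: h1 h2; rewrite -/(Qf _ _) -/(Qf _ _) !Q_expand Q_ev sum_ev_r sum_ev_l.
move=> /geC0_conj E1 /geC0_conj E2.
move: E1 E2; rewrite !(rmorphD, rmorphM, rmorphN, rmorph1) /= !conjCK conjCi.
rewrite (geC0_conj (psd_diag a H)) (geC0_conj (psd_diag b H)).
set x := A a b; set y := A b a; set cx := Num.conj x; set cy := Num.conj y.
move=> /eqP; rewrite -subr_eq0 => /eqP E1.
move=> /eqP; rewrite -subr_eq0 => /eqP E2.
have E2' : cy - cx + y - x = 0.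
  apply: (mulfI (@neq0Ci C)); rewrite mulr0 -E2; ring.
have : (cx - y) *+ 2 = 0.
  have := congr2 (fun p q => p - q) E1 E2'; rewrite subr0 => <-; ring.
by move/eqP; rewrite mulrn_eq0 /= subr_eq0 => /eqP.
Qed.


Lemma psd_row0 (I : finType) (A : I -> I -> C) k b :
  psdF A -> A k k = 0 -> A k b = 0.
Proof.
move=> H Hkk; apply/eqP; apply/negPn/negP => yn0.
set y := A k b in yn0.
have cyn0 : Num.conj y != 0 by rewrite conjC_eq0.
pose t := - (A b b + 1) / (2%:R * Num.conj y).
have := H (fun i => ev b i + (i == k)%:R * t).
rewrite -/(Qf _ _) Q_expand Q_ev sum_ev_r sum_ev_l Hkk mulr0 addr0.
rewrite (psd_herm k b H) -/y.
have -> : Num.conj t = - (A b b + 1) / (2%:R * y).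
  rewrite /t !(rmorphM, rmorphN, rmorphD, fmorphV, rmorph1, rmorph_nat) /= conjCK.
  by rewrite (geC0_conj (psd_diag b H)).
have -> : A b b + - (A b b + 1) / (2%:R * y) * y + t * Num.conj y = -1.
  rewrite /t; field.
  by rewrite yn0 andbT; exact: cyn0.
by rewrite oppr_ge0 ler10.
Qed.

Lemma psd_col0 (I : finType) (A : I -> I -> C) k b :
  psdF A -> A k k = 0 -> A b k = 0.
Proof. by move=> H Hkk; rewrite (psd_herm k b H) psd_row0 // rmorph0. Qed.

Lemma psd_schur (I : finType) (A : I -> I -> C) k : psdF A -> A k k != 0 ->
  psdF (fun a b => A a b - A a k * A k b / A k k).
Proof.
move=> H nz v.
set a := A k k.
set y := \sum_j A k j * v j.
have Hy : \sum_i Num.conj (v i) * A i k = Num.conj y.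
  rewrite /y rmorph_sum; apply: eq_bigr => i _.
  by rewrite (psd_herm k i H) rmorphM /= mulrC.
have ca : Num.conj a = a by rewrite geC0_conj // psd_diag.
have -> : \sum_i \sum_j Num.conj (v i) * (A i j - A i k * A k j / a) * v j
    = Qf A v - (\sum_i Num.conj (v i) * A i k) * (\sum_j A k j * v j) / a.
  rewrite -mulrA mulr_suml /Qf -sumrB; apply: eq_bigr => i _.
  rewrite mulr_suml mulr_sumr -sumrB; apply: eq_bigr => j _; ring.
rewrite Hy -/y.
pose t := - y / a.
have := H (fun i => v i + (i == k)%:R * t).
rewrite -/(Qf _ _) Q_expand Hy -/y -/a.
have -> : Num.conj t = - Num.conj y / a.
  by rewrite /t !(rmorphM, rmorphN, fmorphV) /= ca.
suff -> : Qf A v + - Num.conj y / a * y + t * Num.conj y + - Num.conj y / a * t * a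
   = Qf A v - Num.conj y * y / a by [].
rewrite /t; field; exact: nz.
Qed.


Lemma psd_fact (I : finType) (A : I -> I -> C) : psdF A ->
  exists s : seq (I -> C), forall a b, A a b = \sum_(m <- s) m a * Num.conj (m b).
Proof.
suff gen : forall n (S : {set I}) (A : I -> I -> C), (#|S| <= n)%N -> psdF A ->
    (forall a b, (a \notin S) || (b \notin S) -> A a b = 0) ->
    exists s : seq (I -> C), forall a b, A a b = \sum_(m <- s) m a * Num.conj (m b).
  move=> H; apply: (gen #|I| setT A) => //; first exact: max_card.
  by move=> a b; rewrite !in_setT.
have empty : forall (S : {set I}) (A : I -> I -> C), S = set0 ->
    (forall a b, (a \notin S) || (b \notin S) -> A a b = 0) ->
    exists s : seq (I -> C), forall a b, A a b = \sum_(m <- s) m a * Num.conj (m b).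
  move=> S A0 -> hz; exists [::] => a b; rewrite big_nil; apply: hz.
  by rewrite in_set0.
elim=> [|n IH] S A0 hS H hz.
  apply: (empty S) => //; apply/eqP; rewrite -cards_eq0 -leqn0 //.
case: (set_0Vmem S) => [S0 | [k kS]]; first exact: (empty S).
have hS' : (#|S :\ k| <= n)%N by move: hS; rewrite (cardsD1 k S) kS.
case: (eqVneq (A0 k k) 0) => hkk.
  apply: (IH (S :\ k) A0 hS' H) => a b.
  rewrite !in_setD1 !negb_and !negbK => /orP [/orP[/eqP-> | ha] | /orP[/eqP-> | hb]].
  - exact: psd_row0.
  - by apply: hz; rewrite ha.
  - exact: psd_col0.
  - by apply: hz; rewrite hb orbT.
have hzB : forall a b, (a \notin S :\ k) || (b \notin S :\ k) ->
    A0 a b - A0 a k * A0 k b / A0 k k = 0.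
  move=> a b.
  rewrite !in_setD1 !negb_and !negbK => /orP [/orP[/eqP-> | ha] | /orP[/eqP-> | hb]].
  - by rewrite mulrAC divff // mul1r subrr.
  - by rewrite (hz a b) ?ha // (hz a k) ?ha // !mul0r subrr.
  - by rewrite mulfK // subrr.
  - by rewrite (hz a b) ?hb ?orbT // (hz k b) ?hb ?orbT // mulr0 mul0r subrr.
have [s hs] := IH (S :\ k) _ hS' (psd_schur H hkk) hzB.
exists ((fun a => A0 a k / sqrtC (A0 k k)) :: s) => a b.
rewrite big_cons -hs.
set sq := sqrtC (A0 k k).
have csq : Num.conj sq = sq by rewrite geC0_conj // sqrtC_ge0 psd_diag.
have sq2 : sq * sq = A0 k k by rewrite -expr2 sqrtCK.
have sqn0 : sq != 0 by rewrite sqrtC_eq0.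
rewrite rmorphM fmorphV /= csq -(psd_herm b k H).
rewrite -[X in _ = _ + (_ - _ / X)]sq2; field; exact: sqn0.
Qed.

End Q.
Section M.
Variables (C : numClosedFieldType) (d : nat).

Lemma adjmxE (D : 'M[C]_d) i j : adjmx D i j = Num.conj (D j i).
Proof. by rewrite /adjmx !mxE. Qed.

Lemma entry3 (D1 D2 X : 'M[C]_d) a b : is_diag_mx D1 -> is_diag_mx D2 ->
  (D1 *m X *m adjmx D2) a b = D1 a a * X a b * Num.conj (D2 b b).
Proof.
move=> /is_diag_mxP h1 /is_diag_mxP h2.
rewrite !mxE (bigD1 b) //= big1 ?addr0; last first.
  move=> j /negbTE jb; rewrite adjmxE h2 ?rmorph0 ?mulr0 //.
  by apply/negbT; rewrite eq_sym.
rewrite adjmxE !mxE (bigD1 a) //= big1 ?addr0 //.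
move=> i ia; rewrite h1 ?mul0r //; by rewrite eq_sym.
Qed.

Lemma phase_diag (u : 'I_d -> C) : is_diag_mx (phase_unitary u).
Proof. exact: diag_mx_is_diag. Qed.

Lemma phaseE (u : 'I_d -> C) a : phase_unitary u a a = u a.
Proof. by rewrite /phase_unitary !mxE eqxx mulr1n. Qed.

Lemma delta3 (X : 'M[C]_d) (j k a b : 'I_d) :
  (delta_mx j k *m X *m delta_mx k j) a b = ((a == j) && (b == j))%:R * X k k.
Proof.
rewrite !mxE (bigD1 k) //= big1 ?addr0; last first.
  by move=> l /negbTE lk; rewrite [delta_mx k j l b]mxE lk mulr0.
rewrite [delta_mx k j k b]mxE eqxx /= mxE (bigD1 k) //= big1 ?addr0; last first.
  by move=> l /negbTE lk; rewrite mxE lk andbF mul0r.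
rewrite !mxE !eqxx !andbT; case: (a == j); case: (b == j); rewrite /= ?mulr1 ?mul1r ?mulr0 ?mul0r //.
Qed.


Lemma one_neq_m1 : (1 : C) != -1.
Proof. by rewrite -subr_eq0 opprK -(natrD _ 1 1) pnatr_eq0. Qed.

Lemma i_neq1 : 'i != 1 :> C.
Proof.
apply/eqP => h; have := @mulCii C; rewrite h mulr1 => /eqP.
by rewrite (negbTE one_neq_m1).
Qed.

Lemma i_neqNi : 'i != - 'i :> C.
Proof.
apply/eqP => h; have : 'i *+ 2 = 0 :> C by rewrite mulr2n {1}h addNr.
by move/eqP; rewrite mulrn_eq0 /= (negbTE (@neq0Ci C)).
Qed.

Lemma Ni_neq1 : - 'i != 1 :> C.
Proof.
apply/eqP => h; have h' : 'i = -1 :> C by rewrite -h opprK.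
have := @mulCii C; rewrite h' mulrNN mulr1 => /eqP.
by rewrite (negbTE one_neq_m1).
Qed.

Lemma i_conj_i : 'i * Num.conj 'i = 1 :> C.
Proof. by rewrite conjCi mulrN mulCii opprK. Qed.

Variable Phi : 'M[C]_d -> 'M[C]_d.
Hypothesis lin : is_linear_map Phi.

Lemma Phi0 : Phi 0 = 0.
Proof.
have h := lin 1 0 0; rewrite !scale1r addr0 in h.
by apply: (@addrI _ (Phi 0)); rewrite addr0 -h.
Qed.

Lemma PhiD A B : Phi (A + B) = Phi A + Phi B.
Proof. by have := lin 1 A B; rewrite !scale1r. Qed.

Lemma PhiZ a A : Phi (a *: A) = a *: Phi A.
Proof. by have := lin a A 0; rewrite !addr0 Phi0 addr0. Qed.

Lemma Phi_entry rho a b :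
  Phi rho a b = \sum_k \sum_l rho k l * Phi (delta_mx k l) a b.
Proof.
rewrite {1}(matrix_sum_delta rho) (big_morph Phi PhiD Phi0) summxE.
apply: eq_bigr => k _; rewrite (big_morph Phi PhiD Phi0) summxE.
by apply: eq_bigr => l _; rewrite PhiZ mxE.
Qed.

Definition uf (x : 'I_d) : 'I_d -> C := fun y => if y == x then 'i else 1.

Lemma uf_unit x k : `|uf x k| = 1.
Proof. by rewrite /uf; case: (k == x); rewrite ?normCi ?normr1. Qed.

Hypothesis cov : multiphase_covariant Phi.

Lemma cov_entry u (hu : forall k, `|u k| = 1) (k l a b : 'I_d) :
  u a * Phi (delta_mx k l) a b * Num.conj (u b)
  = u k * Num.conj (u l) * Phi (delta_mx k l) a b.
Proof.
have := cov hu (delta_mx k l).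
move/(congr1 (fun M : 'M[C]_d => M a b)); rewrite entry3 ?phase_diag // !phaseE => ->.
have -> : phase_unitary u *m delta_mx k l *m adjmx (phase_unitary u)
   = (u k * Num.conj (u l)) *: delta_mx k l.
  apply/matrixP => i j; rewrite entry3 ?phase_diag // !phaseE !mxE.
  case: (eqVneq i k) => [->|ik]; case: (eqVneq j l) => [->|jl] /=;
  by rewrite ?mulr1 ?mulr0 ?mul0r.
by rewrite PhiZ mxE.
Qed.

Lemma cov_vanish_x x (k l a b : 'I_d) :
  uf x a * Num.conj (uf x b) != uf x k * Num.conj (uf x l) ->
  Phi (delta_mx k l) a b = 0.
Proof.
move=> neq; have := cov_entry (uf_unit x) k l a b.
move/eqP; rewrite mulrAC -subr_eq0 -mulrBl mulf_eq0 subr_eq0 (negbTE neq) /=.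
by move/eqP.
Qed.

Lemma cov_vanish (k l a b : 'I_d) :
  (if a == b then k != l else (k != a) || (l != b)) ->
  Phi (delta_mx k l) a b = 0.
Proof.
case: (eqVneq a b) => [<- | ab].
  move=> kl; apply: (cov_vanish_x (x := k)).
  rewrite /uf eqxx [l == k]eq_sym (negbTE kl) rmorph1 mulr1.
  have -> : (if a == k then 'i else 1) * Num.conj (if a == k then 'i else 1) = 1 :> C.
    by case: (a == k); rewrite ?i_conj_i ?rmorph1 ?mulr1.
  by rewrite eq_sym i_neq1.
case: (eqVneq k a) => [-> | ka] /=.
  move=> lb; apply: (cov_vanish_x (x := b)).
  rewrite /uf eqxx (negbTE ab) (negbTE lb) rmorph1 conjCi mul1r mulr1.
  exact: Ni_neq1.
move=> _; apply: (cov_vanish_x (x := a)).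
rewrite /uf eqxx (negbTE ka) [b == a]eq_sym (negbTE ab) rmorph1 mulr1 mul1r.
case: (l == a); rewrite ?conjCi ?rmorph1; [exact: i_neqNi | exact: i_neq1].
Qed.

End M.

Lemma psdF_ext (C : numClosedFieldType) (I : finType) (A B : I -> I -> C) :
  (forall p q, A p q = B p q) -> psdF A -> psdF B.
Proof.
move=> e H v; have := H v.
suff -> : \sum_i \sum_j Num.conj (v i) * A i j * v j
        = \sum_i \sum_j Num.conj (v i) * B i j * v j by [].
by apply: eq_bigr => i _; apply: eq_bigr => j _; rewrite e.
Qed.

Lemma diag_pair_sum (C : numClosedFieldType) (d : nat) (F : 'I_d * 'I_d -> C) :
  \sum_p (p.1 == p.2)%:R * F p = \sum_a F (a, a).
Proof.
transitivity (\sum_a \sum_j (a == j)%:R * F (a, j)).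
  by rewrite pair_big /=; apply: eq_bigr; case.
apply: eq_bigr => a _; rewrite (bigD1 a) //= eqxx mul1r big1 ?addr0 //.
by move=> j ja; rewrite eq_sym (negbTE ja) mul0r.
Qed.

Lemma entry_diag (C : numClosedFieldType) (d : nat) (r : 'rV[C]_d) (X : 'M[C]_d) a b :
  (diag_mx r *m X *m adjmx (diag_mx r)) a b = r 0 a * X a b * Num.conj (r 0 b).
Proof. by rewrite entry3 ?diag_mx_is_diag // !mxE !eqxx !mulr1n. Qed.

Theorem mainTheorem8 (C : numClosedFieldType) (d : nat)
    (Phi : 'M[C]_d -> 'M[C]_d) :
  quantum_channel Phi ->
  (multiphase_covariant Phi <->
   exists (r : nat) (M : 'I_r -> 'M[C]_d) (p : 'I_d -> 'I_d -> C),
     (forall i, is_diag_mx (M i)) /\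
     (forall j k : 'I_d, j != k -> 0 <= p j k) /\
     (forall rho : 'M[C]_d,
        Phi rho =
          \sum_(i < r) (M i *m rho *m adjmx (M i))
        + \sum_(k < d) \sum_(j < d | j != k)
            p j k *: (delta_mx j k *m rho *m delta_mx k j))).
Proof.
move=> [lin cp tp]; split.
- move=> cov.
  have Xpsd : psdF (fun p q : 'I_d * 'I_d => ((p.1 == p.2) && (q.1 == q.2))%:R : C).
    move=> v.
    have -> : \sum_p \sum_q Num.conj (v p) * ((p.1 == p.2) && (q.1 == q.2))%:R * v q
       = Num.conj (\sum_q (q.1 == q.2)%:R * v q) * (\sum_q (q.1 == q.2)%:R * v q).
      rewrite rmorph_sum mulr_suml; apply: eq_bigr => p _.
      rewrite mulr_sumr; apply: eq_bigr => q _; rewrite rmorphM rmorph_nat /=.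
      by case: (p.1 == p.2); case: (q.1 == q.2); rewrite /= ?mulr1n ?mulr0n; ring.
    by rewrite mulrC mul_conjC_ge0.
  have Jpsd : psdF (fun p q : 'I_d * 'I_d => Phi (delta_mx p.1 q.1) p.2 q.2).
    apply: psdF_ext (cp d _ Xpsd) => p q /=.
    congr (Phi _ _ _); apply/matrixP => k l; rewrite !mxE /=.
    by congr ((_ : bool)%:R); congr andb; apply/eqP/eqP => ->.
  have Apsd : psdF (fun a b => Phi (delta_mx a b) a b).
    move=> v; have := Jpsd (fun p => (p.1 == p.2)%:R * v p.1).
    rewrite (eq_bigr (fun p => (p.1 == p.2)%:R * (Num.conj (v p.1) *
                 \sum_b Phi (delta_mx p.1 b) p.2 b * v b))); last first.
      move=> p _.
      rewrite (eq_bigr (fun q => (q.1 == q.2)%:R * (Num.conj ((p.1 == p.2)%:R * v p.1)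
                 * Phi (delta_mx p.1 q.1) p.2 q.2 * v q.1))); last by move=> q _; ring.
      rewrite diag_pair_sum /= rmorphM rmorph_nat /= !mulr_sumr.
      by apply: eq_bigr => b _; ring.
    rewrite diag_pair_sum /= => h.
    apply: (eq_ind _ (fun z => 0 <= z) h).
    by apply: eq_bigr => a _; rewrite mulr_sumr; apply: eq_bigr => b _; ring.
  have pge0 : forall k j : 'I_d, 0 <= Phi (delta_mx k k) j j.
    by move=> k j; exact: (psd_diag (k, j) Jpsd).
  have [s hs] := psd_fact Apsd.
  exists (size s), (fun i => diag_mx (\row_j (nth (fun _ => 0) s i) j)),
         (fun j k => Phi (delta_mx k k) j j).
  split; first by move=> i; exact: diag_mx_is_diag.
  split; first by move=> j k _; exact: pge0.
  move=> rho; apply/matrixP => a b.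
  have hs' : forall a b, Phi (delta_mx a b) a b
      = \sum_(i < size s) nth (fun _ => 0) s i a * Num.conj (nth (fun _ => 0) s i b).
    by move=> a' b'; rewrite hs (big_nth (fun _ => 0)) big_mkord.
  rewrite (Phi_entry lin) [RHS]mxE !summxE.
  under [X in _ = X + _]eq_bigr do rewrite entry_diag !mxE.
  have -> : \sum_(i < size s) nth (fun _ => 0) s i a * rho a b
             * Num.conj (nth (fun _ => 0) s i b) = rho a b * Phi (delta_mx a b) a b.
    by rewrite hs' mulr_sumr; apply: eq_bigr => i _; ring.
  under [X in _ = _ + X]eq_bigr do rewrite summxE.
  under [X in _ = _ + X]eq_bigr do under eq_bigr do rewrite mxE delta3.
  case: (eqVneq a b) => [<- | ab].
  + rewrite (eq_bigr (fun k => rho k k * Phi (delta_mx k k) a a)); last first.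
      move=> k _; rewrite (bigD1 k) //= big1 ?addr0 // => l lk.
      by rewrite (cov_vanish lin cov) ?mulr0 // eqxx eq_sym.
    rewrite (bigD1 a) //= [X in _ = _ + X](bigD1 a) //=.
    rewrite [X in _ = _ + (X + _)]big1 ?add0r; last first.
      by move=> j ja; rewrite eq_sym (negbTE ja) /= mul0r mulr0.
    congr (_ + _); apply: eq_bigr => k ka.
    rewrite (bigD1 a) /=; last by rewrite eq_sym.
    rewrite eqxx /= mul1r big1 ?addr0; first by rewrite mulrC.
    by move=> j /andP [_ ja]; rewrite eq_sym (negbTE ja) /= mul0r mulr0.
  + rewrite [X in _ = _ + X]big1 ?addr0; last first.
      move=> k _; rewrite big1 // => j _.
      case: (eqVneq a j) => [<-|aj]; last by rewrite /= mul0r mulr0.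
      by rewrite /= eq_sym (negbTE ab) /= mul0r mulr0.
    rewrite (bigD1 a) //= [X in _ + X = _]big1 ?addr0; last first.
      move=> k ka; rewrite big1 // => l _.
      by rewrite (cov_vanish lin cov) ?mulr0 // (negbTE ab) ka.
    rewrite (bigD1 b) //= [X in _ + X = _]big1 ?addr0 // => l lb.
    by rewrite (cov_vanish lin cov) ?mulr0 // (negbTE ab) lb orbT.
- move=> [r [M [p [hM [hp hPhi]]]]] u hu rho.
  apply/matrixP => a b.
  have uu : forall k, u k * Num.conj (u k) = 1.
    by move=> k; rewrite -normCK hu expr1n.
  have T1 : forall i, (M i *m (phase_unitary u *m rho *m adjmx (phase_unitary u))
        *m adjmx (M i)) a b = u a * (M i *m rho *m adjmx (M i)) a b * Num.conj (u b).
    by move=> i; rewrite !entry3 ?hM ?phase_diag // !phaseE; ring.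
  have T2 : forall k j, (p j k *: (delta_mx j k *m (phase_unitary u *m rho
        *m adjmx (phase_unitary u)) *m delta_mx k j)) a b
      = u a * (p j k *: (delta_mx j k *m rho *m delta_mx k j)) a b * Num.conj (u b).
    move=> k j; rewrite [in LHS]mxE [in RHS]mxE !delta3 entry3 ?phase_diag // !phaseE.
    case: (eqVneq a j) => [->|aj]; last by rewrite /= !mul0r !mulr0 !mul0r.
    case: (eqVneq b j) => [->|bj]; last by rewrite andbF /= !mul0r !mulr0 !mul0r.
    rewrite /= mul1r mulrAC uu mul1r.
    have := uu j; move: (u j) (Num.conj (u j)) => x y h.
    transitivity (p j k * (rho k k) * (x * y)); first by rewrite h mulr1.
    ring.
  rewrite entry3 ?phase_diag // !phaseE !hPhi !mxE !summxE.
  under [X in _ = _ + X]eq_bigr => k _.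
    rewrite summxE.
  over.
  under [X in _ * (_ + X) * _]eq_bigr => k _.
    rewrite summxE.
  over.
  rewrite mulrDr mulrDl !mulr_sumr !mulr_suml; congr (_ + _).
    by apply: eq_bigr => i _; rewrite T1.
  apply: eq_bigr => k _; rewrite mulr_sumr mulr_suml; apply: eq_bigr => j _.
  by rewrite T2.
Qed.
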